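(* Let $I:(0,1)\to(0,1)$ be a nondecreasing function. Then $I$ satisfies $$\int_0^t\frac{ds}{I(s)}\lesssim\frac{t}{I(t)},\quad t\in(0,1),$$ if and only if $$\sup_{0<s\le t}I(s)f^{**}(s)\approx\sup_{0<s\le t}I(s)f^*(s),\quad f\in\mathcal M_+(0,1),\ t\in(0,1).$$ In this case $m_I=M_I$ with equivalent norms.
   Context: $\mathcal M_+(0,1)$: nonnegative measurable functions on $(0,1)$; $f^*$ the nonincreasing rearrangement; $f^{**}(t)=\frac1t\int_0^tf^*(s)ds$. $\|f\|_{m_I}=\sup_{0<t<1}I(t)f^*(t)$, $\|f\|_{M_I}=\sup_{0<t<1}I(t)f^{**}(t)$, with $m_I$, $M_I$ the corresponding sets of functions with finite quantity. $\lesssim$, $\approx$ denote inequalities up to constants independent of $f$ and $t$. *)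

(* Defs.v *)
From HB Require Import structures.
From mathcomp Require Import all_boot all_order all_algebra.
From mathcomp Require Import all_classical all_reals all_analysis measurable_realfun.
Set Implicit Arguments. Unset Strict Implicit. Unset Printing Implicit Defensive.
Import Order.TTheory GRing.Theory Num.Theory.
Local Open Scope classical_set_scope.
Local Open Scope ring_scope.

Definition I01 {R : realType} : set R := `]0, 1[.

Definition I0t {R : realType} (t : R) : set R := `]0, t[.
Definition I0tc {R : realType} (t : R) : set R := `]0, t].

Definition Mplus {R : realType} (f : R -> \bar R) : Prop :=
  measurable_fun (I01 : set R) f /\ (forall x, I01 x -> (0 <= f x)%E).

Definition distf {R : realType} (f : R -> \bar R) (lam : R) : \bar R :=
  (@lebesgue_measure R) (I01 `&` [set x | (lam%:E < f x)%E]).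

Definition fstar {R : realType} (f : R -> \bar R) (t : R) : \bar R :=
  ereal_inf [set lam%:E | lam in [set lam : R | 0 <= lam /\ (distf f lam <= t%:E)%E]].

Definition fstarstar {R : realType} (f : R -> \bar R) (t : R) : \bar R :=
  ((t^-1)%:E * \int[@lebesgue_measure R]_(s in I0t t) fstar f s)%E.

Definition supI {R : realType} (I : R -> R) (g : R -> \bar R) (t : R) : \bar R :=
  ereal_sup [set ((I s)%:E * g s)%E | s in I0tc t].

Definition norm_mI {R : realType} (I : R -> R) (f : R -> \bar R) : \bar R :=
  ereal_sup [set ((I t)%:E * fstar f t)%E | t in I01].
Definition norm_MI {R : realType} (I : R -> R) (f : R -> \bar R) : \bar R :=
  ereal_sup [set ((I t)%:E * fstarstar f t)%E | t in I01].

Definition m_I {R : realType} (I : R -> R) : set (R -> \bar R) :=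
  [set f | Mplus f /\ (norm_mI I f < +oo)%E].
Definition M_I {R : realType} (I : R -> R) : set (R -> \bar R) :=
  [set f | Mplus f /\ (norm_MI I f < +oo)%E].

(* Main.v *)
Require Import Defs.
From HB Require Import structures.
From mathcomp Require Import all_boot all_order all_algebra.
From mathcomp Require Import all_classical all_reals all_analysis measurable_realfun.
From mathcomp Require Import ring lra.
Import Order.TTheory GRing.Theory Num.Theory.
Local Open Scope classical_set_scope.
Local Open Scope ring_scope.

Section helpers.
Context {R : realType}.
Local Notation mu := (@lebesgue_measure R).

Lemma noninc_emeasurable (D : set R) (g : R -> \bar R) :
  measurable D -> is_interval D ->
  (forall x y, D x -> D y -> x <= y -> (g y <= g x)%E) -> measurable_fun D g.
Proof.
move=> mD iD gni.
apply: (measurability _ (ErealGenCInfty.measurableE R)) => //.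
move=> _ [_ [r ->] <-].
apply: is_interval_measurable => x y [Dx gx] [Dy gy] z xzy; case/andP: xzy => xz zy; move: gx gy => /= gx gy.
have Dz : D z by apply: (iD x y Dx Dy); rewrite xz zy.
split => //=.
move: gy; rewrite /= !in_itv /= !andbT => gy.
exact: (le_trans gy (gni _ _ Dz Dy zy)).
Qed.

Lemma fstar_ge0 (f : R -> \bar R) t : (0 <= fstar f t)%E.
Proof.
apply: le_ereal_inf_tmp => _ [l [l0 _] <-]; by rewrite lee_fin.
Qed.

Lemma fstar_noninc (f : R -> \bar R) s t : s <= t -> (fstar f t <= fstar f s)%E.
Proof.
move=> st; apply: ereal_inf_le_tmp => _ [l [l0 dl] <-]; exists l => //; split => //.
by apply: (le_trans dl); rewrite lee_fin.
Qed.

Lemma fstar_measurable (f : R -> \bar R) (D : set R) :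
  measurable D -> is_interval D -> measurable_fun D (fstar f).
Proof.
move=> mD iD; apply: noninc_emeasurable => // x y _ _; exact: fstar_noninc.
Qed.


Lemma mu_I0t (s : R) : 0 < s -> mu (I0t s) = s%:E.
Proof. by move=> s0; rewrite /I0t lebesgue_measure_itv /= lte_fin s0 sube0. Qed.

Lemma measurable_I0t (s : R) : measurable (I0t s).
Proof. exact: measurable_itv. Qed.

Lemma interval_I0t (s : R) : is_interval (I0t s).
Proof.
move=> x y; rewrite /I0t /= !in_itv /= => /andP[x0 _] /andP[_ ys] z /andP[xz zy].
rewrite in_itv /= (lt_le_trans x0 xz) (le_lt_trans zy ys) //=.
Qed.

Lemma fstar_le_fstarstar (f : R -> \bar R) s : 0 < s -> (fstar f s <= fstarstar f s)%E.
Proof.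
move=> s0.
have H : (fstar f s * s%:E <= \int[mu]_(x in I0t s) fstar f x)%E.
  rewrite -mu_I0t // -integral_cst; last exact: measurable_I0t.
  apply: ge0_le_integral.
  - exact: measurable_I0t.
  - by move=> x _; exact: fstar_ge0.
  - exact: measurable_cst.
  - exact: fstar_measurable (measurable_I0t s) (interval_I0t s).
  - move=> x; rewrite /I0t /= in_itv /= => /andP[_ xs].
    by apply: fstar_noninc; exact: ltW.
rewrite /fstarstar; apply: le_trans (lee_wpmul2l _ H); last by rewrite lee_fin invr_ge0 ltW.
by rewrite muleCA -EFinM mulVf ?gt_eqF // mule1.
Qed.

Section withI.
Variable I : R -> R.
Hypothesis I_range : forall s, I01 s -> 0 < I s < 1.
Hypothesis I_nondecr : forall s t, I01 s -> I01 t -> s <= t -> I s <= I t.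

Lemma I0t_I01 (s u : R) : s <= 1 -> I0t s u -> I01 u.
Proof.
move=> s1; rewrite /I0t /I01 /= !in_itv /= => /andP[-> us].
exact: lt_le_trans us s1.
Qed.

Lemma Ipos u : I01 u -> 0 < I u.
Proof. by move/I_range => /andP[]. Qed.
Arguments Ipos [u].

Lemma invI_measurable s : s <= 1 ->
  measurable_fun (I0t s) (fun u => ((I u)^-1)%:E).
Proof.
move=> s1; apply: noninc_emeasurable.
- exact: measurable_I0t.
- exact: interval_I0t.
move=> x y Dx Dy xy; rewrite lee_fin.
have Hx := I0t_I01 _ _ s1 Dx; have Hy := I0t_I01 _ _ s1 Dy.
rewrite lef_pV2 ?posrE ?Ipos //.
exact: I_nondecr.
Qed.

Lemma supI_ge0 (g : R -> \bar R) t : I01 t -> (forall s, (0 <= g s)%E) ->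
  (0 <= supI I g t)%E.
Proof.
move=> t01 g0; apply: le_ereal_sup_tmp; exists ((I t)%:E * g t)%E.
  exists t => //; rewrite /I0tc /= in_itv /= lexx andbT.
  by move: t01; rewrite /I01 /= in_itv /= => /andP[].
by apply: mule_ge0 => //; rewrite lee_fin ltW // Ipos.
Qed.

Lemma I0tc_I01 (t s : R) : I01 t -> I0tc t s -> I01 s.
Proof.
rewrite /I01 /I0tc /= !in_itv /= => /andP[_ t1] /andP[-> st].
exact: le_lt_trans st t1.
Qed.

Lemma A_to_B1 (C : R) : 0 < C ->
  (forall t, I01 t ->
    (\int[mu]_(s in I0t t) ((I s)^-1)%:E <= (C * (t / I t))%:E)%E) ->
  forall (f : R -> \bar R) t, I01 t ->
  (supI I (fstarstar f) t <= C%:E * supI I (fstar f) t)%E.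
Proof.
move=> C0 hA f t t01.
have S0 := supI_ge0 (fstar f) t t01 (fstar_ge0 f).
move: S0; set S := supI I (fstar f) t => S0.
case Sy : S => [r| |]; last by rewrite Sy in S0.
2: by rewrite gt0_muley ?lte_fin // leey.
have r0 : 0 <= r by rewrite -lee_fin -Sy.
apply: ge_ereal_sup => _ [s Hs <-].
have s01 := I0tc_I01 _ _ t01 Hs.
have s0 : 0 < s by move: s01; rewrite /I01 /= in_itv /= => /andP[].
have s1 : s <= 1 by move: s01; rewrite /I01 /= in_itv /= => /andP[_ /ltW].
have Is0 := Ipos s01.
have key : forall u, I0t s u -> (fstar f u <= (r%:E * ((I u)^-1)%:E))%E.
  move=> u Hu.
  have u01 := I0t_I01 _ _ s1 Hu.
  have Iu0 := Ipos u01.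
  have Hut : I0tc t u.
    move: Hu Hs; rewrite /I0t /I0tc /= !in_itv /= => /andP[-> us] /andP[_ st].
    exact: le_trans (ltW us) st.
  have : ((I u)%:E * fstar f u <= r%:E)%E.
    by rewrite -Sy; apply: ereal_sup_ubound; exists u.
  move=> /(lee_wpmul2l (x := ((I u)^-1)%:E)).
  rewrite lee_fin invr_ge0 ltW // => /(_ isT).
  by rewrite muleA -EFinM mulVf ?gt_eqF // mul1e muleC.
have Hint : (\int[mu]_(x in I0t s) fstar f x <= r%:E * (C * (s / I s))%:E)%E.
  apply: le_trans (_ : (\int[mu]_(x in I0t s) (r%:E * ((I x)^-1)%:E) <= _)%E).
    apply: ge0_le_integral.
    - exact: measurable_I0t.
    - by move=> x _; exact: fstar_ge0.
    - exact: fstar_measurable (measurable_I0t s) (interval_I0t s).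
    - by apply: measurable_funeM; exact: invI_measurable.
    - exact: key.
  rewrite ge0_integralZl_EFin //.
  - by apply: lee_wpmul2l; rewrite ?lee_fin //; exact: hA.
  - exact: measurable_I0t.
  - move=> x Hx; rewrite lee_fin invr_ge0 ltW //; apply: Ipos.
    exact: I0t_I01 _ _ s1 Hx.
  - exact: invI_measurable.
rewrite /fstarstar.
apply: le_trans (_ : ((I s)%:E * ((s^-1)%:E * (r%:E * (C * (s / I s))%:E)) <= _)%E).
  apply: lee_wpmul2l; first by rewrite lee_fin ltW.
  by apply: lee_wpmul2l => //; rewrite lee_fin invr_ge0 ltW.
rewrite -!EFinM lee_fin.
have -> : I s * (s^-1 * (r * (C * (s / I s)))) = C * r.
  by field; rewrite ?gt_eqF.
by [].
Qed.

Definition ft (t : R) : R -> \bar R :=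
  fun x => if x < t then ((I x)^-1)%:E else 0%E.

Lemma ft_ge0 t x : I01 x -> (0 <= ft t x)%E.
Proof.
move=> x01; rewrite /ft; case: ifP => _ //.
by rewrite lee_fin invr_ge0 ltW // Ipos.
Qed.

Lemma measurable_I01 : measurable (I01 : set R).
Proof. exact: measurable_itv. Qed.

Lemma interval_I01 : is_interval (I01 : set R).
Proof.
move=> x y; rewrite /I01 /= !in_itv /= => /andP[x0 _] /andP[_ ys] z /andP[xz zy].
rewrite in_itv /= (lt_le_trans x0 xz) (le_lt_trans zy ys) //=.
Qed.

Lemma ft_Mplus t : I01 t -> Mplus (ft t).
Proof.
move=> t01; split; last by move=> x; exact: ft_ge0.
apply: noninc_emeasurable.
- exact: measurable_I01.
- exact: interval_I01.
move=> x y x01 y01 xy; rewrite /ft.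
case: (ltP y t) => yt.
  rewrite (le_lt_trans xy yt) lee_fin lef_pV2 ?posrE ?Ipos //.
  exact: I_nondecr.
by have := ft_ge0 t _ x01; rewrite /ft.
Qed.

Lemma ft_upper t s : I01 t -> I0tc t s -> (fstar (ft t) s <= ((I s)^-1)%:E)%E.
Proof.
move=> t01 Hs.
have s01 := I0tc_I01 _ _ t01 Hs.
have Is0 := Ipos s01.
apply: ereal_inf_lbound; exists (I s)^-1 => //; split.
  by rewrite invr_ge0 ltW.
rewrite /distf -(mu_I0t s); last first.
  by move: s01; rewrite /I01 /= in_itv /= => /andP[].
apply: le_measure; rewrite ?inE.
- apply: emeasurable_fun_o_infty; first exact: measurable_I01.
  by case: (ft_Mplus _ t01).
- exact: measurable_I0t.
move=> x [x01 /=]; rewrite /ft; case: ifP => xt; last first.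
  by rewrite lte_fin ltNge invr_ge0 ltW.
rewrite lte_fin ltf_pV2 ?posrE ?Ipos // => Ixs.
rewrite /I0t /= in_itv /=.
have x01' := x01.
move: x01'; rewrite /I01 /= in_itv /= => /andP[-> _] /=.
rewrite ltNge; apply/negP => sx.
by move: Ixs; rewrite ltNge (I_nondecr _ _ s01 x01 sx).
Qed.

Lemma ft_supI t : I01 t -> (supI I (fstar (ft t)) t <= 1%E)%E.
Proof.
move=> t01; apply: ge_ereal_sup => _ [s Hs <-].
have s01 := I0tc_I01 _ _ t01 Hs.
apply: le_trans (lee_wpmul2l _ (ft_upper _ _ t01 Hs)) _.
  by rewrite lee_fin ltW // Ipos.
by rewrite -EFinM mulfV ?gt_eqF // Ipos.
Qed.

Lemma ft_lower t s u : I01 t -> 0 < s -> s < u -> u < t ->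
  (((I u)^-1)%:E <= fstar (ft t) s)%E.
Proof.
move=> t01 s0 su ut.
have u0 : 0 < u by exact: lt_trans su.
have u01 : I01 u.
  move: t01; rewrite /I01 /= !in_itv /= u0 /= => /andP[_]; exact: lt_trans.
apply: le_ereal_inf_tmp => _ [l [l0 dl] <-].
rewrite leNgt; apply/negP => hl.
have : (mu (I0tc u) <= distf (ft t) l)%E.
  apply: le_measure; rewrite ?inE.
  - exact: measurable_itv.
  - apply: emeasurable_fun_o_infty; first exact: measurable_I01.
    by case: (ft_Mplus _ t01).
  move=> x; rewrite /I0tc /= in_itv /= => /andP[x0 xu].
  have x01 : I01 x.
    rewrite /I01 /= in_itv /= x0 /=.
    move: u01; rewrite /I01 /= in_itv /= => /andP[_]; exact: le_lt_trans.
  split => //=; rewrite /ft (le_lt_trans xu ut).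
  apply: lt_le_trans hl _; rewrite lee_fin lef_pV2 ?posrE ?Ipos //.
  exact: I_nondecr.
rewrite /I0tc lebesgue_measure_itv /= lte_fin u0 sube0.
move=> h; have := le_trans h dl; rewrite lee_fin.
by rewrite leNgt su.
Qed.

Lemma ft_int t : I01 t ->
  (\int[mu]_(x in I0t t) ((I x)^-1)%:E <= \int[mu]_(x in I0t t) fstar (ft t) x)%E.
Proof.
move=> t01.
have t1 : t <= 1 by move: t01; rewrite /I01 /= in_itv /= => /andP[_ /ltW].
set J := [set s | I0t t s /\ (fstar (ft t) s < ((I s)^-1)%:E)%E].
have hq : forall s, exists q : rat, J s ->
    (fstar (ft t) s < (ratr q)%:E)%E /\ ratr q < (I s)^-1.
  move=> s; case: (pselect (J s)) => [[Hs hlt]|nJ]; last first.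
    by exists 0%Q => /nJ.
  have fin : fstar (ft t) s \is a fin_num.
    rewrite ge0_fin_numE; last exact: fstar_ge0.
    exact: lt_trans hlt (ltry _).
  have : fine (fstar (ft t) s) < (I s)^-1 by rewrite -lte_fin fineK.
  move=> /rat_in_itvoo [q]; rewrite in_itv /= => /andP[h1 h2].
  by exists q => _; split => //; rewrite -(fineK fin) lte_fin.
have [g hg] := choice hq.
have cJ : countable J.
  apply/countable_injP; exists (fun s => pickle (g s)).
  have key : forall x y, J x -> J y -> x < y -> g x <> g y.
    move=> x y Jx Jy xy gxy.
    have [Hx _] := Jx; have [Hy _] := Jy.
    move: Hx Hy; rewrite /I0t /= !in_itv /= => /andP[x0 _] /andP[_ yt].
    have h1 := ft_lower _ _ _ t01 x0 xy yt.
    have [h2 _] := hg x Jx.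
    have [_ h3] := hg y Jy.
    rewrite gxy in h2.
    have := lt_le_trans (le_lt_trans h1 h2) (ltW (y := ((I y)^-1)%:E) _).
    by rewrite lte_fin h3 => /(_ isT); rewrite ltxx.
  move=> x y /set_mem Jx /set_mem Jy /(pcan_inj pickleK) gxy.
  case: (ltgtP x y) => // xy.
    by case: (key _ _ Jx Jy xy gxy).
  by case: (key _ _ Jy Jx xy (esym gxy)).
apply: ae_ge0_le_integral.
- exact: measurable_I0t.
- move=> x Hx; rewrite lee_fin invr_ge0 ltW // Ipos //.
  exact: I0t_I01 _ _ t1 Hx.
- exact: invI_measurable.
- by move=> x _; exact: fstar_ge0.
- exact: fstar_measurable (measurable_I0t t) (interval_I0t t).
exists J; split.
- by apply: countable_measurable => //; exact: measurable_set1.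
- exact: countable_lebesgue_measure0.
move=> x /= /not_implyP [Hx /negP]; rewrite -ltNge => h.
by split.
Qed.

Lemma main_sec :
  let condA := exists C : R, 0 < C /\
      forall t, I01 t ->
        (\int[@lebesgue_measure R]_(s in I0t t) ((I s)^-1)%:E
           <= (C * (t / I t))%:E)%E in
  let condB := exists C : R, 0 < C /\
      forall f : R -> \bar R, Mplus f -> forall t, I01 t ->
        (supI I (fstarstar f) t <= C%:E * supI I (fstar f) t)%E /\
        (supI I (fstar f) t <= C%:E * supI I (fstarstar f) t)%E in
  (condA <-> condB) /\
  (condA ->
     m_I I = M_I I /\
     exists C : R, 0 < C /\
       forall f : R -> \bar R, Mplus f ->
         (norm_MI I f <= C%:E * norm_mI I f)%E /\
         (norm_mI I f <= C%:E * norm_MI I f)%E).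
Proof.
move=> condA condB.
have hAB : forall C, 0 < C ->
  (forall t, I01 t ->
    (\int[mu]_(s in I0t t) ((I s)^-1)%:E <= (C * (t / I t))%:E)%E) -> condB.
  move=> C C0 hA; exists (Num.max C 1); split; first by rewrite lt_max C0.
  move=> f Mf t t01.
  have S0 := supI_ge0 (fstar f) t t01 (fstar_ge0 f).
  have h2 : (supI I (fstar f) t <= supI I (fstarstar f) t)%E.
    apply: ge_ereal_sup => _ [s Hs <-].
    have s01 := I0tc_I01 _ _ t01 Hs.
    have s0 : 0 < s by move: s01; rewrite /I01 /= in_itv /= => /andP[].
    apply: le_trans (_ : ((I s)%:E * fstarstar f s <= _)%E).
      by apply: lee_wpmul2l; [rewrite lee_fin ltW // Ipos | exact: fstar_le_fstarstar].
    by apply: ereal_sup_ubound; exists s.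
  split.
    apply: le_trans (A_to_B1 C C0 hA f t t01) _.
    by apply: lee_wpmul2r => //; rewrite lee_fin le_max lexx.
  apply: (le_trans h2).
  rewrite -[X in (X <= _)%E]mul1e; apply: lee_wpmul2r.
    exact: le_trans S0 h2.
  by rewrite lee_fin le_max lexx orbT.
split; first split.
- by case=> C [C0 hA]; exact: hAB C C0 hA.
- case=> C [C0 hB]; exists C; split => // t t01.
  have t0 : 0 < t by move: t01; rewrite /I01 /= in_itv /= => /andP[].
  have It0 := Ipos t01.
  apply: le_trans (ft_int _ t01) _.
  have h : ((I t)%:E * fstarstar (ft t) t <= C%:E)%E.
    apply: le_trans (_ : (supI I (fstarstar (ft t)) t <= _)%E).
      by apply: ereal_sup_ubound; exists t => //; rewrite /I0tc /= in_itv /= t0 lexx.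
    apply: le_trans (proj1 (hB _ (ft_Mplus _ t01) t t01)) _.
    rewrite -[leRHS]mule1; apply: lee_wpmul2l; first by rewrite lee_fin ltW.
    exact: ft_supI.
  move: h; rewrite /fstarstar.
  have : (0 <= \int[mu]_(x in I0t t) fstar (ft t) x)%E.
    by apply: integral_ge0 => x _; exact: fstar_ge0.
  case: (\int[mu]_(x in I0t t) fstar (ft t) x)%E => [r| |] // x0.
    rewrite -!EFinM !lee_fin => h.
    have -> : r = (t / I t) * (I t * (t^-1 * r)) by field; rewrite ?gt_eqF.
    rewrite [C * _]mulrC; apply: ler_wpM2l => //.
    by rewrite divr_ge0 ?ltW.
  by rewrite gt0_muley ?lte_fin ?invr_gt0 // gt0_muley ?lte_fin.
- move=> hA; case: (hA) => C [C0 hA'].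
  have [C' [C'0 hB]] := hAB C C0 hA'.
  have sub : forall (g : R -> \bar R) t, I01 t -> (supI I g t <=
      ereal_sup [set ((I s)%:E * g s)%E | s in I01])%E.
    move=> g t t01; apply: ereal_sup_le => _ [s Hs <-]; exists s => //.
    exact: I0tc_I01 _ _ t01 Hs.
  have ub : forall (g : R -> \bar R) t, I01 t -> ((I t)%:E * g t <= supI I g t)%E.
    move=> g t t01; apply: ereal_sup_ubound; exists t => //.
    move: t01; rewrite /I0tc /I01 /= !in_itv /= lexx andbT => /andP[] //.
  have hN : forall f, Mplus f -> (norm_MI I f <= C'%:E * norm_mI I f)%E /\
                                 (norm_mI I f <= C'%:E * norm_MI I f)%E.
    move=> f Mf; split; apply: ge_ereal_sup => _ [t t01 <-].
      apply: le_trans (ub _ _ t01) _.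
      apply: le_trans (proj1 (hB f Mf t t01)) _.
      by apply: lee_wpmul2l; [rewrite lee_fin ltW | exact: sub].
    apply: le_trans (ub _ _ t01) _.
    apply: le_trans (proj2 (hB f Mf t t01)) _.
    by apply: lee_wpmul2l; [rewrite lee_fin ltW | exact: sub].
  split; last by exists C'; split.
  apply/seteqP; split => f [Mf hf]; split => //.
    apply: le_lt_trans (proj1 (hN f Mf)) _.
    by apply: lte_mul_pinfty; rewrite ?lee_fin ?ltW.
  apply: le_lt_trans (proj2 (hN f Mf)) _.
  by apply: lte_mul_pinfty; rewrite ?lee_fin ?ltW.
Qed.
End withI.
End helpers.

Arguments main_sec : clear implicits.

Theorem proposition3p6 (R : realType) (I : R -> R)
  (I_range : forall s, I01 s -> 0 < I s < 1)
  (I_nondecr : forall s t, I01 s -> I01 t -> s <= t -> I s <= I t) :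
  let condA := exists C : R, 0 < C /\
      forall t, I01 t ->
        (\int[@lebesgue_measure R]_(s in I0t t) ((I s)^-1)%:E
           <= (C * (t / I t))%:E)%E in
  let condB := exists C : R, 0 < C /\
      forall f : R -> \bar R, Mplus f -> forall t, I01 t ->
        (supI I (fstarstar f) t <= C%:E * supI I (fstar f) t)%E /\
        (supI I (fstar f) t <= C%:E * supI I (fstarstar f) t)%E in
  (condA <-> condB) /\
  (condA ->
     m_I I = M_I I /\
     exists C : R, 0 < C /\
       forall f : R -> \bar R, Mplus f ->
         (norm_MI I f <= C%:E * norm_mI I f)%E /\
         (norm_mI I f <= C%:E * norm_MI I f)%E).
Proof. exact: (main_sec R I I_range I_nondecr). Qed.
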